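(* Let $A\subseteq\mathbb{R}$ be a nonempty homogeneous suborder and let $X\subseteq\mathbb{R}$ be finite. Then $A\cup X$ is order-isomorphic to $A$.
   Context: A suborder $A\subseteq\mathbb{R}$ is homogeneous if $A\cong A\cap I$ (order-isomorphism) for every open interval $I=(a,b)$ with $-\infty\le a<b\le\infty$. *)

(* Defs.v *)
(* Suborders of R are subsets R -> Prop,
   ordered by the restriction of the usual order of R. *)
From Stdlib Require Import Reals List.
From Coquelicot Require Import Rbar.
Open Scope R_scope.

Definition order_iso (A B : R -> Prop) : Prop :=
  exists f : R -> R,
    (forall x, A x -> B (f x)) /\
    (forall x y, A x -> A y -> x < y -> f x < f y) /\
    (forall y, B y -> exists x, A x /\ f x = y).

Definition open_interval (a b : Rbar) : R -> Prop :=
  fun x => Rbar_lt a (Finite x) /\ Rbar_lt (Finite x) b.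

Definition set_inter (A B : R -> Prop) : R -> Prop := fun x => A x /\ B x.
Definition set_union (A B : R -> Prop) : R -> Prop := fun x => A x \/ B x.

Definition homogeneous (A : R -> Prop) : Prop :=
  forall a b : Rbar, Rbar_lt a b -> order_iso A (set_inter A (open_interval a b)).

Definition finite_set (X : R -> Prop) : Prop :=
  exists l : list R, forall x, X x <-> In x l.

(* Main.v *)
Require Import Defs.
From Stdlib Require Import Reals List Lra Classical ClassicalEpsilon.
From Coquelicot Require Import Rbar.
Open Scope R_scope.

Lemma iso_ext (S T S' T' : R -> Prop) :
  order_iso S T -> (forall z, S z <-> S' z) -> (forall z, T z <-> T' z) ->
  order_iso S' T'.
Proof.
  intros [f [H1 [H2 H3]]] HS HT. exists f; repeat split.
  - intros x Hx. apply HT, H1, HS, Hx.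
  - intros x y Hx Hy. apply H2; apply HS; auto.
  - intros y Hy. destruct (H3 y (proj2 (HT y) Hy)) as [x [Hx Hfx]].
    exists x; split; auto; apply HS; auto.
Qed.

Lemma iso_trans (S T U : R -> Prop) :
  order_iso S T -> order_iso T U -> order_iso S U.
Proof.
  intros [f [F1 [F2 F3]]] [g [G1 [G2 G3]]]. exists (fun x => g (f x)); repeat split.
  - intros; auto.
  - intros; auto.
  - intros y Hy. destruct (G3 y Hy) as [z [Hz Hgz]].
    destruct (F3 z Hz) as [x [Hx Hfx]]. exists x; split; auto. subst; auto.
Qed.

Lemma iso_sym (S T : R -> Prop) : order_iso S T -> order_iso T S.
Proof.
  intros [f [F1 [F2 F3]]].
  assert (inj : forall x y, S x -> S y -> f x = f y -> x = y).
  { intros x y Hx Hy E. destruct (Rtotal_order x y) as [H|[H|H]]; auto.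
    - apply F2 in H; auto; lra.
    - apply F2 in H; auto; lra. }
  set (g := fun y => epsilon (inhabits 0) (fun x => S x /\ f x = y)).
  assert (Hg : forall y, T y -> S (g y) /\ f (g y) = y).
  { intros y Hy. apply (epsilon_spec (inhabits 0) (fun x => S x /\ f x = y)).
    apply F3; auto. }
  exists g; repeat split.
  - intros y Hy. apply Hg; auto.
  - intros x y Hx Hy Hxy. destruct (Hg x Hx) as [A1 B1]. destruct (Hg y Hy) as [A2 B2].
    destruct (Rtotal_order (g x) (g y)) as [H|[H|H]]; auto.
    + rewrite <- B1, <- B2, H in Hxy. lra.
    + apply F2 in H; auto. lra.
  - intros x Hx. exists (f x). split; auto. destruct (Hg (f x) (F1 x Hx)) as [A1 B1].
    apply inj; auto.
Qed.

Lemma glue (S T S1 S2 T1 T2 : R -> Prop) x c :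
  (forall z, S z <-> S1 z \/ z = x \/ S2 z) ->
  (forall z, S1 z -> z < x) -> (forall z, S2 z -> x < z) ->
  (forall z, T z <-> T1 z \/ z = c \/ T2 z) ->
  (forall z, T1 z -> z < c) -> (forall z, T2 z -> c < z) ->
  order_iso S1 T1 -> order_iso S2 T2 -> order_iso S T.
Proof.
  intros HS HS1 HS2 HT HT1 HT2 [f [F1 [F2 F3]]] [g [G1 [G2 G3]]].
  exists (fun z => if Rlt_dec z x then f z else if Rlt_dec x z then g z else c).
  repeat split.
  - intros z Hz. apply HT. apply HS in Hz.
    destruct (Rlt_dec z x) as [L|L].
    + left. apply F1. destruct Hz as [H|[H|H]]; auto; [subst; lra| apply HS2 in H; lra].
    + destruct (Rlt_dec x z) as [L'|L'].
      * right; right. apply G1. destruct Hz as [H|[H|H]]; auto; [apply HS1 in H; lra| subst; lra].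
      * right; left; auto.
  - intros z w Hz Hw Hzw. apply HS in Hz. apply HS in Hw.
    assert (Z: (S1 z /\ z < x) \/ z = x \/ (S2 z /\ x < z)).
    { destruct Hz as [H|[H|H]]; [left; split; auto|right;left;auto|right;right;split;auto]. }
    assert (W: (S1 w /\ w < x) \/ w = x \/ (S2 w /\ x < w)).
    { destruct Hw as [H|[H|H]]; [left; split; auto|right;left;auto|right;right;split;auto]. }
    destruct Z as [[Z1 Z2]|[Z|[Z1 Z2]]]; destruct W as [[W1 W2]|[W|[W1 W2]]];
    repeat (destruct Rlt_dec; try lra);
    try (apply F2; auto); try (apply G2; auto);
    try (specialize (HT1 _ (F1 _ Z1)); lra);
    try (specialize (HT2 _ (G1 _ W1)); lra);
    try (specialize (HT1 _ (F1 _ Z1)); specialize (HT2 _ (G1 _ W1)); lra).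
  - intros y Hy. apply HT in Hy. destruct Hy as [H|[H|H]].
    + destruct (F3 y H) as [z [Hz E]]. exists z. split. apply HS; auto.
      pose proof (HS1 z Hz). destruct Rlt_dec; [auto| lra].
    + exists x. split. apply HS; auto. repeat (destruct Rlt_dec; try lra).
    + destruct (G3 y H) as [z [Hz E]]. exists z. split. apply HS; auto.
      pose proof (HS2 z Hz). repeat (destruct Rlt_dec; try lra).
Qed.

Lemma main_gen (A : R -> Prop) : (exists a, A a) -> homogeneous A ->
  forall l a b, Rbar_lt a b ->
  order_iso (set_inter (set_union A (fun z => In z l)) (Defs.open_interval a b))
            (set_inter A (Defs.open_interval a b)).
Proof.
  intros [a0 Ha0] Hh l; induction l as [|x l IH]; intros a b Hab.
  - exists (fun z => z). split; [|split].
    + intros z [[H|H] H']; [split; auto| destruct H].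
    + intros; auto.
    + intros y Hy; exists y; split; auto. destruct Hy; split; auto. left; auto.
  - destruct (classic (Defs.open_interval a b x)) as [Hx|Hx].
    + destruct (Hh a b Hab) as [f [F1 _]]. destruct (F1 a0 Ha0) as [Hc1 [Hc2 Hc3]].
      set (c := f a0) in *.
      destruct Hx as [Hx1 Hx2].
      assert (Hcc : forall u v, Rbar_lt u v -> order_iso (set_inter A (Defs.open_interval u v))
                                  (set_inter A (Defs.open_interval a c))).
      { intros u v Huv. apply (iso_trans _ A). apply iso_sym; apply Hh; exact Huv. apply Hh; auto. }
      assert (Hcc' : forall u v, Rbar_lt u v -> order_iso (set_inter A (Defs.open_interval u v))
                                  (set_inter A (Defs.open_interval c b))).
      { intros u v Huv. apply (iso_trans _ A). apply iso_sym; apply Hh; exact Huv. apply Hh; auto. }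
      apply (glue _ _ (set_inter (set_union A (fun z => In z l)) (Defs.open_interval a x))
                     (set_inter (set_union A (fun z => In z l)) (Defs.open_interval x b))
                     (set_inter A (Defs.open_interval a c)) (set_inter A (Defs.open_interval c b)) x c).
      * intros z. unfold set_inter, set_union, Defs.open_interval; simpl. split.
        -- intros [H1 [H2 H3]]. destruct (Rtotal_order z x) as [L|[L|L]].
           ++ left. split; [destruct H1 as [H1|[H1|H1]]; auto; subst; lra|]. simpl; auto.
           ++ auto.
           ++ right; right. split; [destruct H1 as [H1|[H1|H1]]; auto; subst; lra|]. simpl; auto.
        -- intros [[H1 [H2 H3]]|[H|[H1 [H2 H3]]]].
           ++ split. simpl; tauto. split; auto.
              exact (Rbar_lt_trans (Finite z) (Finite x) b H3 Hx2).
           ++ subst. split; simpl; auto.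
           ++ split. simpl; tauto. split; auto.
              exact (Rbar_lt_trans a (Finite x) (Finite z) Hx1 H2).
      * intros z [_ [_ H]]. exact H.
      * intros z [_ [H _]]. exact H.
      * intros z. unfold set_inter, Defs.open_interval; simpl. split.
        -- intros [H1 [H2 H3]]. destruct (Rtotal_order z c) as [L|[L|L]]; auto.
        -- intros [[H1 [H2 H3]]|[H|[H1 [H2 H3]]]].
           ++ split; auto. split; auto. exact (Rbar_lt_trans (Finite z) (Finite c) b H3 Hc3).
           ++ subst; auto.
           ++ split; auto. split; auto. exact (Rbar_lt_trans a (Finite c) (Finite z) Hc2 H2).
      * intros z [_ [_ H]]. exact H.
      * intros z [_ [H _]]. exact H.
      * eapply iso_trans. apply IH; exact Hx1. apply Hcc; exact Hx1.
      * eapply iso_trans. apply IH; exact Hx2. apply Hcc'; exact Hx2.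
    + eapply iso_ext. apply (IH a b Hab).
      * intros z. unfold set_inter, set_union; simpl. split.
        -- intros [[H|H] H']; auto.
        -- intros [[H|[H|H]] H']; auto. subst; contradiction.
      * tauto.
Qed.

Theorem mainTheorem11 (A X : R -> Prop) :
  (exists a, A a) -> homogeneous A -> finite_set X ->
  order_iso (set_union A X) A.
Proof.
  intros HA Hh [l Hl].
  eapply iso_ext. apply (main_gen A HA Hh l m_infty p_infty); simpl; auto.
  - intros z. unfold set_inter, set_union, Defs.open_interval; simpl. split.
    + intros [[H|H] _]; auto. right; apply Hl; auto.
    + intros [H|H]; split; auto. right; apply Hl; auto.
  - intros z. unfold set_inter, Defs.open_interval; simpl. tauto.
Qed.
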